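(* Let $(\Omega,\mathcal{F})$ be a measurable space, $\mathcal{P}$ a nonempty set of probability measures on it, $\hat{\mathbb{E}}[Z]=\sup_{P\in\mathcal{P}}E_P[Z]$, and let $X=(X_1,\dots,X_n)^T$ be an $n$-dimensional random vector with $\hat{\mathbb{E}}[\|X\|^2]<\infty$, where $\|\cdot\|$ is the Euclidean norm. Let $\mathcal{S}=\{E_P[(X-E_P[X])(X-E_P[X])^T]:P\in\mathrm{co}(\mathcal{P})\}$. Then for every $\Sigma=(c_{ij})_{1\le i,j\le n}\in\mathcal{S}$, $$\underline{C}(X_i,X_j)\le c_{ij}\le\overline{C}(X_i,X_j)\quad\text{for all }1\le i,j\le n.$$
   Context: $\mathrm{co}(\mathcal{P})$ is the convex hull of $\mathcal{P}$. For a random variable $W$ with $\hat{\mathbb{E}}[W^2]<\infty$: $\overline{\mu}_W=\hat{\mathbb{E}}[W]$, $\underline{\mu}_W=-\hat{\mathbb{E}}[-W]$, $M_W=[\underline{\mu}_W,\overline{\mu}_W]$. Upper covariance $\overline{C}(Y,Z)=\max_{\mu_2\in M_Z}\min_{\mu_1\in M_Y}\hat{\mathbb{E}}[(Y-\mu_1)(Z-\mu_2)]$; lower covariance $\underline{C}(Y,Z)=\min_{\mu_2\in M_Z}\max_{\mu_1\in M_Y}\left(-\hat{\mathbb{E}}[-(Y-\mu_1)(Z-\mu_2)]\right)$. *)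

(* Defs.v *)
From HB Require Import structures.
From mathcomp Require Import all_boot all_order all_algebra.
From mathcomp Require Import all_classical all_reals all_analysis.
Set Implicit Arguments. Unset Strict Implicit. Unset Printing Implicit Defensive.
Import Order.TTheory GRing.Theory Num.Theory.
Local Open Scope classical_set_scope.
Local Open Scope ring_scope.
Local Open Scope ereal_scope.

Section Defs.
Context {d : measure_display} {T : measurableType d} {R : realType}.

Definition Ehat (PP : set (probability T R)) (Z : T -> R) : \bar R :=
  ereal_sup [set \int[P]_x (Z x)%:E | P in PP].

Definition mu_up PP (W : T -> R) : \bar R := Ehat PP W.
Definition mu_low PP (W : T -> R) : \bar R := - Ehat PP (fun x => - W x)%R.
Definition M_int PP (W : T -> R) : set R :=
  [set m : R | mu_low PP W <= m%:E <= mu_up PP W].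

Definition upper_cov PP (Y Z : T -> R) : \bar R :=
  ereal_sup [set ereal_inf [set Ehat PP (fun x => (Y x - m1) * (Z x - m2))%R
                           | m1 in M_int PP Y] | m2 in M_int PP Z].

Definition lower_cov PP (Y Z : T -> R) : \bar R :=
  ereal_inf [set ereal_sup [set - Ehat PP (fun x => - ((Y x - m1) * (Z x - m2)))%R
                           | m1 in M_int PP Y] | m2 in M_int PP Z].

Definition in_convex_hull (PP : set (probability T R)) (Q : probability T R) : Prop :=
  exists (k : nat) (w : 'I_k -> R) (Ps : 'I_k -> probability T R),
    [/\ (forall i, 0 <= w i)%R, (\sum_(i < k) w i = 1)%R,
        (forall i, PP (Ps i)) &
        forall A, measurable A -> Q A = \sum_(i < k) (w i)%:E * Ps i A].

Definition mean (Q : probability T R) (W : T -> R) : R := fine (\int[Q]_x (W x)%:E).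

Definition cov_entry (Q : probability T R) (n : nat) (X : 'I_n -> T -> R)
  (i j : 'I_n) : \bar R :=
  \int[Q]_x ((X i x - mean Q (X i)) * (X j x - mean Q (X j)))%:E.

End Defs.

(* Main.v *)
Require Import Defs.
From HB Require Import structures.
From mathcomp Require Import all_boot all_order all_algebra.
From mathcomp Require Import all_classical all_reals all_analysis.
From mathcomp Require Import measurable_realfun.
From mathcomp Require Import ring lra.
Set Implicit Arguments. Unset Strict Implicit.
Import Order.TTheory GRing.Theory Num.Theory.
Local Open Scope classical_set_scope.
Local Open Scope ring_scope.
Local Open Scope ereal_scope.

Section Mix.
Context (d : measure_display) (T : measurableType d) (R : realType).
Variables (k : nat) (w : 'I_k -> R) (Ps : 'I_k -> probability T R) (Q : probability T R).
Hypothesis hw : forall i, (0 <= w i)%R.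
Hypothesis hQ : forall A, measurable A -> Q A = \sum_(i < k) (w i)%:E * Ps i A.

Let m_ (n : nat) : {measure set T -> \bar R} :=
  match insub n with Some o => mscale (NngNum (hw o)) (Ps o) | None => mzero end.

Lemma mix_ge0 (f : T -> \bar R) : (forall x, 0 <= f x) -> measurable_fun [set: T] f ->
  \int[Q]_x f x = \sum_(i < k) (w i)%:E * \int[Ps i]_x f x.
Proof.
move=> f0 mf.
rewrite (eq_measure_integral (msum m_ k)); last first.
  move=> A mA _; rewrite /msum /=; apply: (etrans (hQ mA)); apply: eq_bigr => o _.
  by rewrite /m_ (_ : insub (nat_of_ord o) = Some o) //; exact: valK.
rewrite ge0_integral_measure_sum //; apply: eq_bigr => o _.
by rewrite /m_ (_ : insub (nat_of_ord o) = Some o) ?ge0_integral_mscale //; exact: valK.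
Qed.

Lemma mix_int (f : T -> R) : measurable_fun [set: T] f ->
  (forall i, (Ps i).-integrable [set: T] (EFin \o f)) ->
  \int[Q]_x (f x)%:E = (\sum_(i < k) w i * mean (Ps i) f)%:E.
Proof.
rewrite /mean; move=> mf hint.
have mfE : measurable_fun [set: T] (EFin \o f) by exact/measurable_EFinP.
have fa i : \int[Ps i]_x (EFin \o f)^\+ x \is a fin_num.
  rewrite ge0_fin_numE; first exact: (integral_funepos_lt_pinfty measurableT (hint i)).
  by apply: integral_ge0 => x _; exact: funepos_ge0.
have fb i : \int[Ps i]_x (EFin \o f)^\- x \is a fin_num.
  rewrite ge0_fin_numE; first exact: (integral_funeneg_lt_pinfty measurableT (hint i)).
  by apply: integral_ge0 => x _; exact: funeneg_ge0.
rewrite integralE (mix_ge0 (f:=(EFin \o f)^\+)) //; last exact: measurable_funepos.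
rewrite (mix_ge0 (f:=(EFin \o f)^\-)) //; last exact: measurable_funeneg.
transitivity ((\sum_(i < k) w i * fine (\int[Ps i]_x (EFin \o f)^\+ x))%:E -
   (\sum_(i < k) w i * fine (\int[Ps i]_x (EFin \o f)^\- x))%:E).
  by congr (_ - _); rewrite -sumEFin; apply: eq_bigr => i _; rewrite EFinM fineK.
rewrite -EFinB -sumrB; congr EFin; apply: eq_bigr => i _.
rewrite -mulrBr; congr (_ * _)%R; rewrite [in RHS]integralE. by rewrite -(fineB (fa i) (fb i)).
Qed.
End Mix.

Section Means.
Context (d : measure_display) (T : measurableType d) (R : realType).
Variable P : probability T R.
Definition Int (f : T -> R) := P.-integrable [set: T] (EFin \o f).

Lemma IntD f g : Int f -> Int g -> Int (fun x => f x + g x)%R.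
Proof.
move=> hf hg; rewrite /Int (_ : EFin \o _ = (EFin \o f) \+ (EFin \o g)).
  exact: integrableD.
by apply/funext => x /=; rewrite EFinD.
Qed.

Lemma IntZ c f : Int f -> Int (fun x => c * f x)%R.
Proof.
move=> hf; rewrite /Int (_ : EFin \o _ = (fun x => c%:E * (EFin \o f) x)).
  exact: integrableZl.
by apply/funext => x /=; rewrite EFinM.
Qed.

Lemma IntC c : Int (fun _ => c).
Proof. exact: finite_measure_integrable_cst. Qed.

Lemma meanD f g : Int f -> Int g ->
  mean P (fun x => f x + g x)%R = (mean P f + mean P g)%R.
Proof.
move=> hf hg; rewrite /mean.
under eq_integral do rewrite EFinD.
rewrite (integralD_EFin _ hf hg) //.
by rewrite fineD //; exact: integrable_fin_num.
Qed.

Lemma meanZ c f : Int f -> mean P (fun x => c * f x)%R = (c * mean P f)%R.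
Proof.
move=> hf; rewrite /mean.
under eq_integral do rewrite EFinM.
rewrite (integralZl _ hf) //= fineM //; exact: integrable_fin_num.
Qed.

Lemma meanC c : mean P (fun _ => c) = c.
Proof.
rewrite /mean integral_cst //; set y := (X in (_ * X)%E); have -> : y = 1 by exact: probability_setT.
by rewrite mule1.
Qed.

Lemma mean_int f : Int f -> \int[P]_x (f x)%:E = (mean P f)%:E.
Proof. by move=> hf; rewrite /mean fineK //; exact: integrable_fin_num. Qed.

Lemma meanN f : Int f -> mean P (fun x => - f x)%R = (- mean P f)%R.
Proof.
move=> hf; rewrite (_ : (fun x => - f x)%R = (fun x => -1 * f x)%R).
  by rewrite meanZ // mulN1r.
by apply/funext => x; rewrite mulN1r.
Qed.

Lemma IntN f : Int f -> Int (fun x => - f x)%R.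
Proof.
move=> hf; rewrite (_ : (fun x => - f x)%R = (fun x => -1 * f x)%R).
  exact: IntZ.
by apply/funext => x; rewrite mulN1r.
Qed.

Lemma prod_eq (Y Z : T -> R) a b :
  (fun x => (Y x - a) * (Z x - b))%R =
  (fun x => ((Y x * Z x + (- b) * Y x) + (- a) * Z x) + a * b)%R.
Proof. by apply/funext => x; rewrite mulrBl !mulrBr; ring. Qed.

Lemma Int_prod (Y Z : T -> R) a b : Int Y -> Int Z -> Int (fun x => Y x * Z x)%R ->
  Int (fun x => (Y x - a) * (Z x - b))%R.
Proof.
move=> hY hZ hYZ; rewrite prod_eq.
by apply: IntD; [apply: IntD; [apply: IntD|]|]; rewrite ?IntC //; apply: IntZ.
Qed.

Lemma mean_prod (Y Z : T -> R) a b : Int Y -> Int Z -> Int (fun x => Y x * Z x)%R ->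
  mean P (fun x => (Y x - a) * (Z x - b))%R =
  (mean P (fun x => Y x * Z x) - b * mean P Y - a * mean P Z + a * b)%R.
Proof.
move=> hY hZ hYZ; rewrite prod_eq.
rewrite meanD; last exact: IntC.
  rewrite meanC meanD; last exact: IntZ.
    rewrite meanZ // meanD //; last exact: IntZ.
    rewrite meanZ //; ring.
  by apply: IntD => //; exact: IntZ.
by apply: IntD; [apply: IntD|] => //; exact: IntZ.
Qed.
End Means.

Section Main.
Context (R : realType).

Lemma conv_le k (w e : 'I_k -> R) (H : \bar R) : (forall i, 0 <= w i)%R ->
  (\sum_(i < k) w i = 1)%R -> (forall i, (e i)%:E <= H) ->
  (\sum_(i < k) w i * e i)%:E <= H.
Proof.
move=> hw hs; case: H => [r| |] he.
- rewrite lee_fin; apply: (@le_trans _ _ (\sum_(i < k) w i * r)%R).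
    by apply: ler_sum => i _; apply: ler_wpM2l => //; rewrite -lee_fin.
  by rewrite -mulr_suml hs mul1r.
- by rewrite leey.
- exfalso; move: hs; rewrite big1 => [/esym/eqP|l _]; first by rewrite oner_eq0.
  by have := he l; rewrite leeNy_eq.
Qed.

Lemma sum_lin k (w A y z : 'I_k -> R) a b : (\sum_(i < k) w i = 1)%R ->
  (\sum_(l < k) w l * (A l - b * y l - a * z l + a * b) =
   \sum_(l < k) w l * A l - b * \sum_(l < k) w l * y l
     - a * \sum_(l < k) w l * z l + a * b)%R.
Proof.
move=> hs.
rewrite (eq_bigr (fun l => w l * A l + (-b) * (w l * y l) + (-a) * (w l * z l)
   + (a * b) * w l)%R); last by move=> l _; ring.
rewrite !big_split /= -!mulr_sumr hs; ring.
Qed.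

Lemma abs_le1 (a : R) : (`|a| <= 1 + a ^+ 2)%R.
Proof. by case: (lerP 0 a) => h; [rewrite ger0_norm | rewrite ltr0_norm]; nra. Qed.

Lemma abs_prod_le (a b s : R) : (a ^+ 2 <= s)%R -> (b ^+ 2 <= s)%R -> (`|a * b| <= s)%R.
Proof.
rewrite -[(a ^+ 2)%R](real_normK (num_real a)) -[(b ^+ 2)%R](real_normK (num_real b)) normrM => ha hb.
have := normr_ge0 a; have := normr_ge0 b; nra.
Qed.
End Main.

Unset Implicit Arguments. Set Strict Implicit.

Theorem proposition4p8 (d : measure_display) (T : measurableType d) (R : realType)
  (PP : set (probability T R)) (n : nat) (X : 'I_n -> T -> R) :
  PP !=set0 ->
  (forall i, measurable_fun setT (X i)) ->
  Ehat PP (fun x => \sum_(i < n) X i x ^+ 2)%R < +oo ->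
  forall Q : probability T R, in_convex_hull PP Q ->
  forall i j : 'I_n,
    lower_cov PP (X i) (X j) <= cov_entry Q X i j <= upper_cov PP (X i) (X j).
Proof.
move=> _ mX hE Q [k [w [Ps [hw hs hPP hQ]]]] i j.
pose sq := (fun x => \sum_(l < n) X l x ^+ 2)%R.
have msq : measurable_fun [set: T] sq.
  by apply: measurable_sum => l; apply: measurable_funX.
have sq_ge0 x : (0 <= sq x)%R by apply: sumr_ge0 => l _; exact: sqr_ge0.
have sq_ub l x : (X l x ^+ 2 <= sq x)%R.
  rewrite /sq (bigD1 l) //= lerDl; apply: sumr_ge0 => m _; exact: sqr_ge0.
have IntSq P : PP P -> Int P sq.
  move=> hP; apply/integrableP; split; first exact/measurable_EFinP.
  rewrite (eq_integral (fun x => (sq x)%:E)); last by move=> x _; rewrite abse_EFin ger0_norm.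
  apply: le_lt_trans hE; apply: ereal_sup_ubound; by exists P.
have IntX P l : PP P -> Int P (X l).
  move=> hP; apply: (le_integrable measurableT _ _ (IntD (IntC P 1%R) (IntSq P hP))).
    exact/measurable_EFinP.
  move=> x _ /=; rewrite lee_fin (ger0_norm (addr_ge0 ler01 (sq_ge0 x))).
  exact: le_trans (abs_le1 _) (lerD (lexx _) (sq_ub l x)).
have IntXX P l m : PP P -> Int P (fun x => X l x * X m x)%R.
  move=> hP; apply: (le_integrable measurableT _ _ (IntSq P hP)).
    by apply/measurable_EFinP; exact: measurable_funM.
  move=> x _ /=; rewrite lee_fin (ger0_norm (sq_ge0 x)).
  exact: abs_prod_le.
have mg a b : measurable_fun [set: T] (fun x => (X i x - a) * (X j x - b))%R.
  by apply: measurable_funM; apply: measurable_funB => //; exact: measurable_cst.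
have Intg P a b : PP P -> Int P (fun x => (X i x - a) * (X j x - b))%R.
  by move=> hP; apply: Int_prod; auto.
have U f : (forall P, PP P -> Int P f) ->
    (\sum_(l < k) w l * mean (Ps l) f)%:E <= Ehat PP f.
  move=> hf; apply: conv_le => // l.
  rewrite -mean_int; last exact: hf.
  apply: ereal_sup_ubound; by exists (Ps l).
have L f : (forall P, PP P -> Int P f) ->
    - Ehat PP (fun x => - f x)%R <= (\sum_(l < k) w l * mean (Ps l) f)%:E.
  move=> hf; rewrite leeNl -EFinN.
  have -> : (- \sum_(l < k) w l * mean (Ps l) f = \sum_(l < k) w l * mean (Ps l) (fun x => - f x))%R.
    rewrite -sumrN; apply: eq_bigr => l _; rewrite meanN ?mulrN //; exact: hf.
  by apply: U => P hP; apply: IntN; exact: hf.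
pose yQ := (\sum_(l < k) w l * mean (Ps l) (X i))%R.
pose zQ := (\sum_(l < k) w l * mean (Ps l) (X j))%R.
pose AQ := (\sum_(l < k) w l * mean (Ps l) (fun x => X i x * X j x))%R.
have eQi : mean Q (X i) = yQ.
  by rewrite /mean (mix_int hw hQ) //= => l; exact: IntX.
have eQj : mean Q (X j) = zQ.
  by rewrite /mean (mix_int hw hQ) //= => l; exact: IntX.
have gen a b : (\sum_(l < k) w l * mean (Ps l) (fun x => (X i x - a) * (X j x - b)))%R
    = (AQ - b * yQ - a * zQ + a * b)%R.
  rewrite -sum_lin //; apply: eq_bigr => l _; rewrite mean_prod //; auto.
have cov_eq : cov_entry Q X i j = (AQ - yQ * zQ)%:E.
  rewrite /cov_entry (mix_int hw hQ) //; last by move=> l; apply: Intg.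
  rewrite eQi eQj gen; congr EFin; ring.
have MQj : M_int PP (X j) zQ.
  rewrite /M_int /=; apply/andP; split.
    by rewrite /mu_low; apply: L => P hP; exact: IntX.
  by rewrite /mu_up; apply: U => P hP; exact: IntX.
rewrite cov_eq; apply/andP; split.
- rewrite /lower_cov; apply: le_trans.
    by apply: ereal_inf_lbound; exists zQ.
  apply/ereal_supP => _ [m1 hm1 <-].
  have := L _ (fun P hP => Intg P m1 zQ hP); rewrite gen.
  by rewrite (_ : (AQ - zQ * yQ - m1 * zQ + m1 * zQ = AQ - yQ * zQ)%R) //; ring.
- rewrite /upper_cov; apply: le_trans; last first.
    by apply: ereal_sup_ubound; exists zQ.
  apply/ereal_infP => _ [m1 hm1 <-].
  have := U _ (fun P hP => Intg P m1 zQ hP); rewrite gen.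
  by rewrite (_ : (AQ - zQ * yQ - m1 * zQ + m1 * zQ = AQ - yQ * zQ)%R) //; ring.
Qed.
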